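(* Let $H$ be a separable Hilbert space, let $L\subset H$ be compact, let $K\subset H$ be a convex self-dual cone and let $v\in K$. Then there is $D>0$ with the following property. For all $a<b$ and all curves $c\in C^2([a,b],L)$ parametrized by arc length with $c'([a,b])\subset v-K$ and $c''([a,b])\subset K$, one has $l(c)\le D$.
   Context: A cone $K$ is self-dual if $K=\{u\in H:\langle u,k\rangle\ge0\ \forall k\in K\}$. $v-K=\{v-k:k\in K\}$. $l(c)$ is the length of $c$. *)

(* Defs.v *)
From HB Require Import structures.
From mathcomp Require Import all_boot all_order all_algebra.
From mathcomp Require Import all_classical all_reals all_analysis.
Set Implicit Arguments. Unset Strict Implicit. Unset Printing Implicit Defensive.
Import Order.TTheory GRing.Theory Num.Theory.
Import numFieldNormedType.Exports.
Local Open Scope classical_set_scope.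
Local Open Scope ring_scope.

(* ip is a (real) inner product on V inducing the norm of V. Together with
   V : completeNormedModType R this makes (V, ip) a real Hilbert space. *)
Definition is_inner_product (R : realType) (V : normedModType R)
  (ip : V -> V -> R) : Prop :=
  [/\ (forall x y, ip x y = ip y x),
      (forall (a : R) (x y z : V), ip (a *: x + y) z = a * ip x z + ip y z)
    & (forall x, ip x x = `|x| ^+ 2)].

Definition separable (T : topologicalType) : Prop :=
  exists D : set T, countable D /\ closure D = setT.

Definition convex_cone (R : realType) (V : normedModType R) (K : set V) : Prop :=
  (forall (t : R) x, 0 <= t -> K x -> K (t *: x)) /\
  (forall (t : R) x y, 0 <= t <= 1 -> K x -> K y -> K (t *: x + (1 - t) *: y)).

Definition self_dual (R : realType) (V : normedModType R)
  (ip : V -> V -> R) (K : set V) : Prop :=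
  K = [set u | forall k, K k -> 0 <= ip u k].

Definition deriv_on (R : realType) (V : normedModType R) (a b : R)
  (f f' : R -> V) : Prop :=
  forall t, `[a, b]%classic t ->
    (fun s => (s - t)^-1 *: (f s - f t)) @ within (`[a, b]%classic `\ t) (nbhs t)
      --> f' t.

Definition C2_on (R : realType) (V : normedModType R) (a b : R)
  (c c1 c2 : R -> V) : Prop :=
  [/\ {within `[a, b]%classic, continuous c}, deriv_on a b c c1,
      {within `[a, b]%classic, continuous c1}, deriv_on a b c1 c2
    & {within `[a, b]%classic, continuous c2}].

Definition curve_length (R : realType) (V : normedModType R) (a b : R)
  (c1 : R -> V) : R :=
  Rintegral (@lebesgue_measure R) `[a, b]%classic (fun t => `|c1 t|).

(* Main.v *)
Require Import Defs.
From HB Require Import structures.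
From mathcomp Require Import all_boot all_order all_algebra.
From mathcomp Require Import all_classical all_reals all_analysis.
From mathcomp Require Import ring lra.
Import Order.TTheory GRing.Theory Num.Theory.
Import numFieldNormedType.Exports.
Local Open Scope classical_set_scope.
Local Open Scope ring_scope.
Set Implicit Arguments. Unset Strict Implicit.
Lemma deriv_quot (R : realType) (a b : R) (f f' : R -> R) x :
  deriv_on a b f f' -> x \in `]a, b[ ->
  (fun h => h^-1 *: (f (h + x) - f x)) @ 0^' --> f' x.
Proof.
move=> df xab.
have xab' : `[a,b]%classic x by rewrite /= in_itv /= !ltW ?(itvP xab).
move: (df x xab') => /cvgrPdist_lt H; apply/cvgrPdist_lt => e e0.
have := H e e0.
move=> Hn; rewrite near_withinE in Hn.
move: Hn => /nbhs_ballP [d /= d0 Hd].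
rewrite near_withinE; apply/nbhs_ballP.
have ax : 0 < x - a by rewrite subr_gt0 (itvP xab).
have xb : 0 < b - x by rewrite subr_gt0 (itvP xab).
exists (Num.min d (Num.min (x - a) (b - x))).
  by rewrite /= !lt_min d0 ax xb.
move=> h /=; rewrite /ball /= sub0r normrN !lt_min => /and3P[hd hxa hbx] hn0.
have := Hd (h + x).
rewrite addrK; apply.
  by rewrite /ball /= distrC addrK.
split.
  rewrite in_itv /=.
  move: hxa hbx; rewrite !ltr_norml => /andP[h1 h2] /andP[h3 h4].
  apply/andP; split; lra.
move=> hx; move: hn0; rewrite -(addrK x h) hx subrr eqxx //.
Qed.

Lemma deriv_mono (R : realType) (a b : R) (f f' : R -> R) :
  {within `[a,b], continuous f} -> deriv_on a b f f' ->
  (forall x, `[a,b]%classic x -> 0 <= f' x) ->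
  forall x y, a <= x -> x <= y -> y <= b -> f x <= f y.
Proof.
move=> cf df f'0; apply: ger0_derive1_ndecr => // x xab.
- have H := deriv_quot df xab.
  rewrite /derivable.
  have -> : (fun h : R => h^-1 *: ((f \o shift x) (h *: 1) - f x)) =
            (fun h => h^-1 *: (f (h + x) - f x)).
    by apply/funext => h /=; rewrite /shift /= [h *: 1]mulr1.
  by apply/cvg_ex; exists (f' x).
- rewrite /derive1 (cvg_lim _ (deriv_quot df xab)) //.
  by apply: f'0; rewrite /= in_itv /= !ltW ?(itvP xab).
Qed.

Lemma ipLs (R : realType) (H : normedModType R) (ip : H -> H -> R) :
  is_inner_product ip -> forall a b x y z,
  ip (a *: x + b *: y) z = a * ip x z + b * ip y z.
Proof.
move=> [ipC ipL ipN] a b x y z.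
have ip0 : forall w, ip 0 w = 0.
  move=> w; have := ipL 1 0 0 w; rewrite scale1r addr0 mul1r => h; lra.
have ipS : forall c w w', ip (c *: w) w' = c * ip w w'.
  by move=> c w w'; have := ipL c w 0 w'; rewrite addr0 ip0 addr0.
by rewrite ipL ipS.
Qed.

Lemma ipS (R : realType) (H : normedModType R) (ip : H -> H -> R) :
  is_inner_product ip -> forall a x z, ip (a *: x) z = a * ip x z.
Proof.
move=> Hip a x z; have := ipLs Hip a 0 x x z.
by rewrite scale0r addr0 mul0r addr0.
Qed.

Lemma ipB (R : realType) (H : normedModType R) (ip : H -> H -> R) :
  is_inner_product ip -> forall x y z, ip (x - y) z = ip x z - ip y z.
Proof.
move=> Hip x y z; have := ipLs Hip 1 (-1) x y z.
by rewrite scale1r scaleN1r mul1r mulN1r.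
Qed.

Lemma ipD (R : realType) (H : normedModType R) (ip : H -> H -> R) :
  is_inner_product ip -> forall x y z, ip (x + y) z = ip x z + ip y z.
Proof.
move=> Hip x y z; have := ipLs Hip 1 1 x y z.
by rewrite !scale1r !mul1r.
Qed.

Lemma ip0l (R : realType) (H : normedModType R) (ip : H -> H -> R) :
  is_inner_product ip -> forall z, ip 0 z = 0.
Proof. by move=> Hip z; have := ipS Hip 0 0 z; rewrite scale0r mul0r. Qed.

Lemma ipCS (R : realType) (H : normedModType R) (ip : H -> H -> R) :
  is_inner_product ip -> forall x y, `|ip x y| <= `|x| * `|y|.
Proof.
move=> Hip x y; have [ipC _ ipN] := Hip.
set A := `|x|; set B := `|y|; set p := ip x y.
have e : ip (B^+2 *: x + (- p) *: y) (B^+2 *: x + (- p) *: y)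
   = B^+2 * (B^+2 * A^+2 - p^+2).
  rewrite ipLs // ipC ipLs // [ip y (_ + _)]ipC ipLs // ipN -/A.
  rewrite [ip y x]ipC -/p ipN -/B. ring.
have ge0 : 0 <= B^+2 * (B^+2 * A^+2 - p^+2) by rewrite -e ipN exprn_ge0.
have A0 : 0 <= A by apply: normr_ge0.
have B0 : 0 <= B by apply: normr_ge0.
have [Bz|Bp] := eqVneq B 0.
  have y0 : y = 0 by apply/normr0_eq0.
  by rewrite Bz mulr0 /p y0 ipC ip0l // normr0.
have Bpos : 0 < B by rewrite lt_def Bp B0.
have h : p^+2 <= (A * B)^+2.
  have : 0 <= B^+2 * A^+2 - p^+2.
    by rewrite -(pmulr_rge0 _ (exprn_gt0 2 Bpos)).
  by rewrite exprMn mulrC subr_ge0.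
rewrite -(ler_pXn2r (n:=2)) //= ?nnegrE ?mulr_ge0 //.
by rewrite real_normK ?num_real.
Qed.

Lemma ip_cont (R : realType) (H : normedModType R) (ip : H -> H -> R) :
  is_inner_product ip -> forall u, continuous (fun x => ip x u).
Proof.
move=> Hip u x; apply/cvgrPdist_lt => e e0.
apply/nbhs_ballP.
have u1 : 0 < `|u| + 1 by rewrite ltr_wpDl.
exists (e / (`|u| + 1)); first by rewrite /= divr_gt0.
move=> y hy.
rewrite -ipB //.
apply: (le_lt_trans (ipCS Hip _ _)).
have hd : e / (`|u| + 1) * (`|u| + 1) = e by rewrite divfK // gt_eqF.
have n0 : 0 <= `|x - y| by [].
have : `|x - y| * `|u| <= e / (`|u| + 1) * `|u|.
  apply: ler_wpM2r => //; apply: ltW; move: hy; rewrite -ball_normE /= //.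
have : e / (`|u| + 1) * `|u| < e / (`|u| + 1) * (`|u| + 1).
  by rewrite ltr_pM2l ?divr_gt0 // ltrDl.
rewrite hd => h1 h2; exact: le_lt_trans h2 h1.
Qed.

Lemma deriv_ip (R : realType) (H : normedModType R) (ip : H -> H -> R) a b
  (c c1 : R -> H) u k :
  is_inner_product ip -> deriv_on a b c c1 ->
  deriv_on a b (fun r => ip (c r) u + r * k) (fun r => ip (c1 r) u + k).
Proof.
move=> Hip dc t tab.
have h1 : (fun s => ip ((s - t)^-1 *: (c s - c t)) u + k) @
   within (`[a, b]%classic `\ t) (nbhs t) --> ip (c1 t) u + k.
  apply: cvgD; last exact: cvg_cst.
  exact: (cvg_comp _ (fun x => ip x u) (dc t tab) (@ip_cont _ _ _ Hip u (c1 t))).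
apply: cvg_trans h1; apply: near_eq_cvg.
rewrite near_withinE; apply: nearW => s [_ st].
have st' : s - t != 0 by rewrite subr_eq0; apply/eqP.
rewrite ipS // ipB //.
change ((s - t)^-1 * (ip (c s) u - ip (c t) u) + k =
  (s - t)^-1 * (ip (c s) u + s * k - (ip (c t) u + t * k))).
by field.
Qed.

Lemma cont_ip (R : realType) (H : normedModType R) (ip : H -> H -> R) a b
  (c : R -> H) u k :
  is_inner_product ip -> {within `[a,b], continuous c} ->
  {within `[a,b], continuous (fun r => ip (c r) u + r * k)}.
Proof.
move=> Hip cc.
have -> : (fun r => ip (c r) u + r * k) = (fun r => ip (c r) u) + (fun r => r * k) by [].
move=> x; apply: continuousD.
  exact: (continuous_comp (cc x) (@ip_cont _ _ _ Hip u _)).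
exact: (continuous_subspaceT (@scalel_continuous _ _ k)).
Qed.

Lemma length_unit (R : realType) (H : normedModType R) (a b : R) (c1 : R -> H) :
  a < b -> (forall t, `[a, b]%classic t -> `|c1 t| = 1) ->
  curve_length a b c1 = b - a.
Proof.
move=> ab h; rewrite /curve_length.
rewrite (@eq_Rintegral _ _ _ _ _ (fun _ => 1)); last first.
  by move=> x; rewrite inE => /h.
rewrite Rintegral_cst; last exact: measurable_itv.
have h1 := @lebesgue_measure_itv R `[a, b].
rewrite /= lte_fin ab /= in h1.
rewrite mul1r [X in fine X](_ : _ = (b - a)%:E) //.

Qed.

Lemma deriv_on_sub (R : realType) (V : normedModType R) a b s t (f f' : R -> V) :
  deriv_on a b f f' -> a <= s -> t <= b -> deriv_on s t f f'.
Proof.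
move=> df hs ht x xst.
have sub : forall y, `[s, t]%classic y -> `[a, b]%classic y.
  move=> y; rewrite /= !in_itv /= => /andP[h1 h2]; apply/andP; split.
    exact: le_trans hs h1.
  exact: le_trans h2 ht.
apply: cvg_trans (df x (sub x xst)).
have sub2 : `[s, t]%classic `\ x `<=` `[a, b]%classic `\ x.
  by move=> y [yst ny]; split => //; exact: sub.
move=> P; apply: (within_subset _ sub2).
Qed.

Unset Implicit Arguments.

Theorem theorem7 (R : realType) (H : completeNormedModType R)
  (ip : H -> H -> R) (Hip : is_inner_product ip) (Hsep : separable H)
  (L : set H) (K : set H) (v : H) :
  compact L -> convex_cone K -> self_dual ip K -> K v ->
  exists D : R, 0 < D /\
    forall (a b : R) (c c1 c2 : R -> H),
      a < b ->
      C2_on a b c c1 c2 ->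
      c @` `[a, b]%classic `<=` L ->
      (forall t, `[a, b]%classic t -> `|c1 t| = 1) ->
      c1 @` `[a, b]%classic `<=` [set v - k | k in K] ->
      c2 @` `[a, b]%classic `<=` K ->
      curve_length a b c1 <= D.
Proof.
move=> Lc _ Ksd Kv.
have [ipC ipL ipN] := Hip.
have Kip : forall k1 k2, K k1 -> K k2 -> 0 <= ip k1 k2.
  move=> k1 k2 h1 h2; rewrite Ksd in h1; exact: h1 k2 h2.
have [M [M0 HM]] : exists M : R, 0 <= M /\ forall x, L x -> `|x| <= M.
  have := compact_bounded Lc.
  case=> M [Mr HM]; exists (`|M| + 1); split; first by rewrite addr_ge0.
  move=> x Lx; apply: (HM (`|M| + 1)) => //.
  by rewrite (le_lt_trans (ler_norm M)) // ltrDl.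
pose N := (Num.Def.trunc (4 * `|v|)).+1.
have hN : 4 * `|v| < N%:R := truncnS_gt _.
exists (4 * M * N.+1%:R + 1); split.
  have : 0 <= 4 * M * N.+1%:R by rewrite !mulr_ge0 // ler0n.
  move=> h; lra.
move=> a b c c1 c2 ab [cc dc cc1 dc1 cc2] cL c1n c1K c2K.
rewrite (length_unit ab c1n).
have inab : forall r, a <= r -> r <= b -> `[a, b]%classic r.
  by move=> r h1 h2; rewrite /= in_itv /= h1 h2.
have subI : forall s t, a <= s -> t <= b -> `[s, t]%classic `<=` `[a, b]%classic.
  move=> s t hs ht y; rewrite /= !in_itv /= => /andP[h1 h2].
  by rewrite (le_trans hs h1) (le_trans h2 ht).
have hK1 : forall r, `[a, b]%classic r -> K (v - c1 r).
  move=> r hr; have [k Kk e] : [set v - k | k in K] (c1 r) by apply: c1K; exists r.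
  by rewrite -e opprB addrC subrK.
have hK2 : forall r, `[a, b]%classic r -> K (c2 r).
  by move=> r hr; apply: c2K; exists r.
have hL : forall r, `[a, b]%classic r -> `|c r| <= M.
  by move=> r hr; apply: HM; apply: cL; exists r.
have ipCr : forall x y z, ip x (y - z) = ip x y - ip x z.
  by move=> x y z; rewrite ipC ipB // ipC [ip z x]ipC.
have c1sq : forall r, `[a, b]%classic r -> ip (c1 r) (c1 r) = 1.
  by move=> r hr; rewrite ipN c1n // expr1n.
have mono : forall w, K w -> forall r1 r2, a <= r1 -> r1 <= r2 -> r2 <= b ->
    ip (c1 r1) w <= ip (c1 r2) w.
  move=> w Kw r1 r2 h1 h2 h3.
  have c' : {within `[a, b], continuous (fun r => ip (c1 r) w + r * 0)} :=
    cont_ip Hip cc1.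
  have d' : deriv_on a b (fun r => ip (c1 r) w + r * 0)
     (fun r => ip (c2 r) w + 0) := deriv_ip Hip dc1.
  have nn : forall x, `[a, b]%classic x -> 0 <= ip (c2 x) w + 0.
    by move=> x hx; rewrite addr0; apply: Kip => //; apply: hK2.
  by have := deriv_mono c' d' nn h1 h2 h3; rewrite !mulr0 !addr0.
pose phi := fun r => ip (c1 r) v.
have phib : forall r, `[a, b]%classic r -> `|phi r| <= `|v|.
  move=> r hr; rewrite /phi; apply: le_trans (ipCS Hip _ _) _.
  by rewrite c1n // mul1r.
have phimono : forall r1 r2, a <= r1 -> r1 <= r2 -> r2 <= b -> phi r1 <= phi r2.
  exact: mono v Kv.
have cphi : {within `[a, b], continuous phi}.
  have := cont_ip (u := v) (k := 0) Hip cc1.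
  have -> : (fun r => ip (c1 r) v + r * 0) = phi.
    by apply/funext => r; rewrite mulr0 addr0.
  by [].
have claim1 : forall s t, a <= s -> s <= t -> t <= b -> phi t - phi s <= 1/2 ->
    t - s <= 4 * M.
  move=> s t hs st tb hphi.
  have nn : forall r, `[s, t]%classic r -> 0 <= ip (c1 r) (c1 s) + - (1/2).
    move=> r; rewrite /= in_itv /= => /andP[sr rt].
    have ra : a <= r by exact: le_trans hs sr.
    have rb : r <= b by exact: le_trans rt tb.
    have m1 := mono _ (hK1 r (inab r ra rb)) s r hs sr rb.
    have m2 := phimono r t ra rt tb.
    rewrite !ipCr (c1sq r (inab r ra rb)) [ip (c1 s) (c1 r)]ipC in m1.
    rewrite /phi in hphi m2 m1; lra.
  have ccst : {within `[s, t], continuous c} :=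
    continuous_subspaceW (subI s t hs tb) cc.
  have c' : {within `[s, t], continuous
     (fun r => ip (c r) (c1 s) + r * (- (1/2)))} := cont_ip Hip ccst.
  have d' : deriv_on s t (fun r => ip (c r) (c1 s) + r * (- (1/2)))
     (fun r => ip (c1 r) (c1 s) + - (1/2)) :=
     deriv_ip Hip (deriv_on_sub dc hs tb).
  have m := deriv_mono c' d' nn (lexx s) st (lexx t).
  have hb : ip (c t) (c1 s) - ip (c s) (c1 s) <= 2 * M.
    rewrite -ipB //; apply: le_trans (ler_norm _) _; apply: le_trans (ipCS Hip _ _) _.
    rewrite (c1n s (inab s hs (le_trans st tb))) mulr1.
    apply: le_trans (ler_normB _ _) _.
    have := hL t (inab t (le_trans hs st) tb).
    have := hL s (inab s hs (le_trans st tb)).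
    move=> h1 h2; lra.
  lra.
have claim2 : forall n : nat, forall s t, a <= s -> s <= t -> t <= b ->
    phi t - phi s <= n%:R / 2 -> t - s <= 4 * M * n.+1%:R.
  elim=> [|n IH] s t hs st tb hphi.
    rewrite mulr1; apply: claim1 => //.
    move: hphi; rewrite mulr0n mul0r => h; lra.
  have hMn : 0 <= 4 * M * n.+1%:R by rewrite !mulr_ge0 // ler0n.
  case: (lerP (phi t - phi s) (1/2)) => h.
    have := claim1 s t hs st tb h.
    rewrite [n.+2%:R]mulrS mulrDr mulr1 => h'; lra.
  have fst := phimono s t hs st tb.
  have [r] : exists2 r, r \in `[s, t] & phi r = phi s + 1/2.
    apply: IVT => //; first exact: continuous_subspaceW (subI s t hs tb) cphi.
    rewrite ge_min le_max; apply/andP; split; apply/orP.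
      by left; lra.
    by right; lra.
  rewrite in_itv /= => /andP[sr rt] hr.
  have h1 : r - s <= 4 * M.
    by apply: claim1 => //; [exact: le_trans rt tb | rewrite hr; lra].
  have h2 : t - r <= 4 * M * n.+1%:R.
    apply: IH => //; first exact: le_trans hs sr.
    move: hphi; rewrite [n.+1%:R]mulrS => hphi; lra.
  rewrite [n.+2%:R]mulrS mulrDr mulr1; lra.
have hphiab : phi b - phi a <= N%:R / 2.
  have := phib a (inab a (lexx a) (ltW ab)).
  have := phib b (inab b (ltW ab) (lexx b)).
  rewrite !ler_norml => /andP[h1 h2] /andP[h3 h4]; lra.
have := claim2 N a b (lexx a) (ltW ab) (lexx b) hphiab.
move=> h; lra.
Qed.
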